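(* For every $N$-relay FD 1-2-1 network with graph $G=([0:N+1],E)$ and positive rational link capacities as in the context, assuming $\mathcal P\neq\emptyset$, there exists a path $p\in\mathcal P$ with $\mathsf C_p\ge\frac{1}{2N+2}\mathsf{C}_{\rm cs,iid}$, where $\mathsf{C}_{\rm cs,iid}$ is computed with FD states.
   Context: Nodes are $[0:N+1]$; node $0$ is the source, $N+1$ the destination, $[1:N]$ relays. $E\subseteq\{(i,j): i\in[0:N],\ j\in[1:N+1],\ i\ne j\}$ is a set of directed links; each $(i,j)\in E$ has a positive rational capacity $\ell_{j,i}$, and $\ell_{j,i}=0$ for $(i,j)\notin E$. FD network states: a state $s$ consists of sets $s_{i,t}\subseteq[1:N+1]\setminus\{i\}$ and $s_{i,r}\subseteq[0:N]\setminus\{i\}$, each of cardinality at most $1$, for $i\in[0:N+1]$, with $s_{0,r}=s_{N+1,t}=\emptyset$; $\mathcal S$ is the set of all states. Link $(i,j)$ is active in $s$ if $j\in s_{i,t}$ and $i\in s_{j,r}$. $\mathsf{C}_{\rm cs,iid}=\max_{\lambda}\min_{\Omega}\sum_{i\in\Omega,\ j\in\Omega^c}\big(\sum_{s\in\mathcal S:\ (i,j)\text{ active in }s}\lambda_s\big)\ell_{j,i}$, maximum over probability vectors $(\lambda_s)_{s\in\mathcal S}$, minimum over $\Omega$ with $0\in\Omega\subseteq[0:N]$, $\Omega^c=[0:N+1]\setminus\Omega$. $\mathcal P$ is the set of all directed paths of distinct nodes from $0$ to $N+1$ using links of $E$; $\mathsf C_p=\min_{(i,j)\text{ consecutive on }p}\ell_{j,i}$.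 *)

(* Defs.v *)
From HB Require Import structures.
From mathcomp Require Import all_boot all_order all_algebra.
Set Implicit Arguments. Unset Strict Implicit. Unset Printing Implicit Defensive.
Import Order.TTheory GRing.Theory Num.Theory.
Local Open Scope ring_scope.

(* Nodes are 'I_N.+2 = [0 : N+1]; node 0 = ord0 (source), node N+1 = ord_max
   (destination). *)
Notation node N := ('I_N.+2).

(* E is a set of directed links (i,j); ell j i is the capacity of link (i,j). *)
Definition valid_links (N : nat) (E : {set node N * node N}) : Prop :=
  forall i j : node N, (i, j) \in E ->
    [/\ i != ord_max, j != ord0 & i != j].

Definition valid_caps (N : nat) (E : {set node N * node N})
    (ell : node N -> node N -> rat) : Prop :=
  forall i j : node N,
    (((i, j) \in E) -> 0 < ell j i) /\ (((i, j) \notin E) -> ell j i = 0).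

(* An FD state: s_{i,t} and s_{i,r}, each a set of cardinality at most 1,
   represented by an option. *)
Definition state (N : nat) : finType :=
  ({ffun node N -> option (node N)} * {ffun node N -> option (node N)})%type.

Definition st N (s : state N) := s.1.
Definition sr N (s : state N) := s.2.

Definition valid_state N (s : state N) : bool :=
  [forall i : node N,
     (st s i != Some i) && (st s i != Some ord0) &&
     (sr s i != Some i) && (sr s i != Some ord_max)]
  && (sr s ord0 == None) && (st s ord_max == None).

Definition active N (s : state N) (i j : node N) : bool :=
  (st s i == Some j) && (sr s j == Some i).

Definition is_prob (R : realFieldType) N (lam : state N -> R) : Prop :=
  [/\ forall s, 0 <= lam s,
      forall s, ~~ valid_state s -> lam s = 0
    & \sum_(s | valid_state s) lam s = 1].

Definition cut_value (R : realFieldType) N (ell : node N -> node N -> rat)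
    (lam : state N -> R) (Om : {set node N}) : R :=
  \sum_(i in Om) \sum_(j in ~: Om)
     (\sum_(s | valid_state s && active s i j) lam s) * ratr (ell j i).

Definition valid_cut N (Om : {set node N}) : bool :=
  (ord0 \in Om) && (ord_max \notin Om).

(* C is C_{cs,iid} = max_lam min_Om cut_value: some lam achieves min >= C,
   and every lam has min <= C. *)
Definition is_Ccsiid (R : realFieldType) N (ell : node N -> node N -> rat)
    (C : R) : Prop :=
  (exists lam, is_prob lam /\
     forall Om, valid_cut Om -> C <= cut_value ell lam Om)
  /\ (forall lam, is_prob lam ->
        exists Om, valid_cut Om /\ cut_value ell lam Om <= C).

Definition is_path N (E : {set node N * node N}) (p : seq (node N)) : bool :=
  [&& head ord_max p == ord0, last ord0 p == ord_max, uniq p &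
      path (fun i j => (i, j) \in E) ord0 (behead p)].

Definition path_link_caps N (ell : node N -> node N -> rat)
    (p : seq (node N)) : seq rat :=
  [seq ell ij.2 ij.1 | ij <- zip p (behead p)].

Definition path_cap N (ell : node N -> node N -> rat) (p : seq (node N)) : rat :=
  let v := path_link_caps ell p in
  \big[Num.min/head 0 v]_(x <- v) x.

(* Main.v *)
Require Import Defs.
From HB Require Import structures.
From mathcomp Require Import all_boot all_order all_algebra.
From mathcomp Require Import lra zify.
Import Order.TTheory GRing.Theory Num.Theory.
Local Open Scope ring_scope.

Lemma path_zip_rel (T : eqType) (e : rel T) x s :
  path e x s -> forall a b, (a, b) \in zip (x :: s) s -> e a b.
Proof.
elim: s x => //= c s IH x /andP[exc pc] a b; rewrite inE.
case/orP => [/eqP[-> ->] // | H]; exact: IH pc a b H.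
Qed.

Lemma cap_ge (R : realFieldType) N (ell : node N -> node N -> rat) (t : R)
  (e : rel (node N)) x s :
  (forall a b, e a b -> t <= ratr (ell b a)) -> s != [::] -> path e x s ->
  t <= ratr (path_cap ell (x :: s)).
Proof.
move=> He sn Hp.
have Hv : forall y, y \in path_link_caps ell (x :: s) -> t <= ratr y.
  move=> y /mapP [[a b] /= Hab ->]; apply: He.
  exact: path_zip_rel Hp a b Hab.
rewrite /path_cap /=.
case: s sn Hp Hv => [//|c s] _ Hp Hv.
rewrite big_seq; apply: (big_ind (fun y => t <= ratr y)).
- by apply: Hv; rewrite /path_link_caps /= inE eqxx.
- by move=> a b Ha Hb; rewrite /Num.min; case: leP.
- by move=> i /Hv.
Qed.

Lemma is_path_inv N (E : {set node N * node N}) p : is_path E p ->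
  [/\ p = ord0 :: behead p, behead p != [::] &
      path (fun i j => (i, j) \in E) ord0 (behead p)].
Proof.
case: p => [|x s] /and4P[h l u pa].
  by move: h; rewrite /= -(inj_eq val_inj).
move: h l => /= /eqP -> l; split => //.
case: s l {u pa} => //= /eqP /(congr1 val) /=.
Qed.

Arguments cap_ge {R N ell t e x s}.
Arguments is_path_inv {N E p}.

Theorem lemma3 (R : realFieldType) (N : nat) (E : {set node N * node N})
    (ell : node N -> node N -> rat) (C : R) :
  valid_links E -> valid_caps E ell ->
  (exists p, is_path E p) ->
  is_Ccsiid ell C ->
  exists p, is_path E p /\
    C / (2 * N + 2)%:R <= ratr (path_cap ell p).
Proof.
move=> HvE Hcap [p0 Hp0] [[lam [[Hl0 _ Hl1] Hcut]] _].
set d := (2 * N + 2)%:R : R.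
have d0 : 0 < d by rewrite /d ltr0n addn2.
case: (lerP C 0) => [C0 | C0].
  exists p0; split => //.
  apply: (@le_trans _ _ 0); first by rewrite ler_pdivrMr // mul0r.
  have [e1 sn pa] := is_path_inv Hp0; rewrite e1.
  apply: (cap_ge _ sn pa) => a b ab.
  by rewrite ler0q ltW // (Hcap a b).1.
set t := C / d.
have t0 : 0 < t by rewrite /t divr_gt0.
pose e := fun i j : node N => ((i, j) \in E) && (t <= ratr (ell j i)).
case: (boolP (connect e ord0 ord_max)) => Hc.
  move/connectP: Hc => [q pq].
  case: (shortenP pq) => q' pq' uq' _ lq.
  exists (ord0 :: q'); split.
    apply/and4P; split => //=; first by rewrite -lq.
    by apply: sub_path pq' => a b /andP[].
  apply: (cap_ge (e := e)) => //; first by move=> a b /andP[].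
  by case: q' lq {pq' uq'} => //= /eqP; rewrite -(inj_eq val_inj).
exfalso.
set Om := [set j | connect e ord0 j].
have vc : valid_cut Om by rewrite /valid_cut !inE connect0.
have := Hcut Om vc; rewrite /cut_value.
set w := fun i j => \sum_(s | valid_state s && active s i j) lam s.
have w0 : forall i j, 0 <= w i j by move=> i j; apply: sumr_ge0.
have w1 : forall i, \sum_j w i j <= 1.
  move=> i; rewrite /w.
  under eq_bigr do rewrite big_mkcondr.
  rewrite exchange_big /= -Hl1; apply: ler_sum => s _.
  case E1: (st s i) => [k|].
    rewrite (bigD1 k) //= big1 ?addr0; first by case: ifP.
    move=> j jk; case: ifP => // /andP[]; rewrite E1 => /eqP[kj].
    by rewrite kj eqxx in jk.
  by rewrite big1 // => j _; rewrite /active E1.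
have key : forall i, i \in Om ->
    \sum_(j in ~: Om) w i j * ratr (ell j i) <= t.
  move=> i iO.
  apply: (@le_trans _ _ (\sum_(j in ~: Om) w i j * t)).
    apply: ler_sum => j jO; apply: ler_wpM2l => //.
    case: (boolP ((i, j) \in E)) => ij; last first.
      by rewrite (Hcap i j).2 // rmorph0 ltW.
    rewrite leNgt; apply/negP => lt.
    move: jO; rewrite !inE => /negP; apply.
    move: iO; rewrite inE => iO.
    apply: connect_trans iO (connect1 _).
    by rewrite /e ij ltW.
  rewrite -mulr_suml -[X in _ <= X]mul1r; apply: ler_wpM2r; first exact: ltW.
  apply: le_trans (w1 i).
  rewrite [X in _ <= X](bigID (fun j => j \in ~: Om)) /= lerDl.
  by apply: sumr_ge0.
have Hsum : \sum_(i in Om) \sum_(j in ~: Om) w i j * ratr (ell j i)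
    <= #|Om|%:R * t.
  apply: (@le_trans _ _ (\sum_(i in Om) t)); first exact: ler_sum.
  by rewrite sumr_const mulr_natl.
have cardO : (#|Om| <= N.+1)%N.
  have := cardsC Om; rewrite card_ord.
  have : (0 < #|~: Om|)%N by apply/card_gt0P; exists ord_max; rewrite !inE.
  lia.
have cR : #|Om|%:R * t <= (N.+1)%:R * t.
  by apply: ler_wpM2r; [exact: ltW | rewrite ler_nat].
have Ct : (N.+1)%:R * t * 2 = C.
  rewrite /t -mulrA [_ * 2]mulrC mulrA.
  have -> : (N.+1)%:R * 2 = d :> R.
    by rewrite /d -natrM; congr _%:R; lia.
  by rewrite mulrC divfK // gt_eqF.
move=> HC.
have : C <= (N.+1)%:R * t by apply: le_trans cR; apply: le_trans Hsum.
move: Ct; set u := (N.+1)%:R * t => Ct; lra.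
Qed.
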